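(* Let $(X,\tau)$ be an extended locally convex space and let $\tau_F$ be its finest locally convex topology. Then a linear functional on $X$ is continuous with respect to $\tau$ if and only if it is continuous with respect to $\tau_F$; that is, $(X,\tau)^*=(X,\tau_F)^*$.
   Context: Let $X$ be a vector space over $\mathbb{R}$ or $\mathbb{C}$. An extended seminorm on $X$ is a map $\rho:X\to[0,\infty]$ with $\rho(\alpha x)=|\alpha|\rho(x)$ and $\rho(x+y)\le\rho(x)+\rho(y)$. An extended locally convex space $(X,\tau)$ is a vector space with the topology $\tau$ induced by a family $\{\rho_i\}$ of extended seminorms (neighborhood base at $x_0$: sets $\{x:\max_{i\in J}\rho_i(x-x_0)<\varepsilon\}$, $J$ finite, $\varepsilon>0$). A locally convex topology is one induced in this way by finite-valued seminorms. The finest locally convex topology $\tau_F$ of $(X,\tau)$ is the locally convex topology on $X$ with $\tau_F\subseteq\tau$ such that every locally convex topology $\sigma$ on $X$ with $\sigma\subseteq\tau$ satisfies $\sigma\subseteq\tau_F$ (it exists and is unique). $(X,\tau)^*$ denotes the set of $\tau$-continuous linear functionals on $X$. *)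

(* Defs.v *)
From HB Require Import structures.
From mathcomp Require Import all_boot all_order all_algebra.
From mathcomp Require Import all_classical all_reals all_analysis.
Set Implicit Arguments. Unset Strict Implicit. Unset Printing Implicit Defensive.
Import Order.TTheory GRing.Theory Num.Theory.
Import numFieldNormedType.Exports.
Local Open Scope classical_set_scope.
Local Open Scope ring_scope.
Local Open Scope ereal_scope.

(* Scalars: an arbitrary numFieldType K (covers R and C).  A "topology" on X is
   given by its family of open sets [tau : set (set X)]. *)

Section Defs.
Variables (K : numFieldType) (X : lmodType K).

Definition ext_seminorm (rho : X -> \bar K) : Prop :=
  [/\ forall x, 0 <= rho x,
      forall (a : K) x, rho (a *: x) = (`|a|)%:E * rho x
    & forall x y, rho (x + y)%R <= rho x + rho y].

Definition induced_topology (I : Type) (rho : I -> X -> \bar K) : set (set X) :=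
  [set U | forall x0, U x0 ->
     exists (J : set I) (eps : K), [/\ finite_set J, (0 < eps)%R &
       [set x | forall i, J i -> rho i (x - x0)%R < eps%:E] `<=` U]].

Definition ext_locally_convex_topology (tau : set (set X)) : Prop :=
  exists (I : Type) (rho : I -> X -> \bar K),
    (forall i, ext_seminorm (rho i)) /\ tau = induced_topology rho.

Definition locally_convex_topology (sigma : set (set X)) : Prop :=
  exists (I : Type) (rho : I -> X -> \bar K),
    [/\ forall i, ext_seminorm (rho i),
        forall i x, rho i x < +oo
      & sigma = induced_topology rho].

Definition finest_lc_topology (tau tauF : set (set X)) : Prop :=
  [/\ locally_convex_topology tauF, tauF `<=` tau &
      forall sigma, locally_convex_topology sigma -> sigma `<=` tau ->
        sigma `<=` tauF].

Definition tcontinuous (tau : set (set X)) (f : X -> K) : Prop :=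
  forall V : set K, open V -> tau (f @^-1` V).

End Defs.

(* Main.v *)
Require Import Defs.
From HB Require Import structures.
From mathcomp Require Import all_boot all_order all_algebra.
From mathcomp Require Import all_classical all_reals all_analysis.
Import Order.TTheory GRing.Theory Num.Theory.
Import numFieldNormedType.Exports.
Local Open Scope classical_set_scope.
Local Open Scope ring_scope.

Theorem corollary3p6 (K : numFieldType) (X : lmodType K)
  (tau tauF : set (set X)) :
  ext_locally_convex_topology tau ->
  finest_lc_topology tau tauF ->
  forall f : {scalar X},
    tcontinuous tau f <-> tcontinuous tauF f.
Proof.
move=> [I [r [_ ->]]] [_ sub maxF] f; split; last first.
  by move=> h V oV; apply: sub; apply: h.
move=> hf.
pose rho := fun (_ : unit) (x : X) => (`|f x|)%:E.
have lc : locally_convex_topology (induced_topology rho).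
  exists unit, rho; split => //; last first.
  by move=> i x; rewrite /rho real_ltry normr_real.
  move=> i; split.
  - by move=> x; rewrite /rho lee_fin.
  - by move=> a x; rewrite /rho linearZ /= normrM EFinM.
  - by move=> x y; rewrite /rho raddfD /= lee_fin ler_normD.
have sst : induced_topology rho `<=` induced_topology r.
  move=> U hU x0 Ux0.
  have [J [eps [_ e0 sJ]]] := hU x0 Ux0.
  have := hf (ball (f x0) eps) (ball_open _ _) x0.
  case; first exact: ballxx.
  move=> J' [eps' [fJ' e0' sJ']]; exists J', eps'; split => // x /sJ' bx.
  apply: sJ => i _; rewrite /rho lte_fin raddfB /= distrC.
  by move: bx; rewrite /= -ball_normE.
move=> V oV; apply: (maxF _ lc) => //.
move=> x0 Vx0; have : nbhs (f x0) V by exact: open_nbhs_nbhs.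
move=> /nbhs_ballP [eps e0 bV]; exists [set tt], eps; split => //.
move=> x hx; apply: bV; rewrite -ball_normE /= distrC -raddfB.
by have := hx tt erefl; rewrite /rho lte_fin.
Qed.
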